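(* Let $n\ge2$, $q_1,q_2\in\mathbb{C}$ with $q_1q_2\ne0$ and $q=-q_2/q_1$ not a root of unity, and put $a=q/(1+q)$, $b=1/(1+q)$. Let $\overline{G}$ be the Zariski closure in $\mathrm{GL}_{n-1}(\mathbb{C})$ of $\rho(B_n)$, matrices being taken with respect to the basis $f_1,\dots,f_{n-1}$ of $\mathbf{F}$. (a) If $q_1^{n-2}q_2$ is not a root of unity, then for each $i=1,\dots,n-1$, $\overline{G}$ contains the one-parameter subgroup $H_i$ consisting of the matrices \[(1-\delta_{i,1})b(1-z)e_{i,i-1}+z\,e_{ii}+(1-\delta_{i,n-1})a(1-z)e_{i,i+1}+E(i),\qquad z\in\mathbb{C}\setminus\{0\}.\] (b) If $q_1^{n-2}q_2$ is a root of unity, then for each $i=1,\dots,n-1$, $\overline{G}$ contains the one-parameter subgroup $K_i$ consisting of the matrices \[(1-\delta_{i,1})b(w-w^{2-n})e_{i,i-1}+w^{2-n}e_{ii}+(1-\delta_{i,n-1})a(w-w^{2-n})e_{i,i+1}+w\,E(i),\qquad w\in\mathbb{C}\setminus\{0\}.\]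
   Context: $B_n$ is Artin's braid group with generators $\sigma_1,\dots,\sigma_{n-1}$. $\mathbf{E}=\mathbb{C}^n$ with basis $e_1,\dots,e_n$ carries the generalized Burau representation $\sigma_ie_j=q_1e_j$ ($j\ne i,i+1$), $\sigma_ie_{i+1}=-q_2e_i$, $\sigma_ie_i=(q_1+q_2)e_i+q_1e_{i+1}$. Let $f_i=q_2e_i+q_1e_{i+1}$ ($1\le i\le n-1$), $\mathbf{F}=\mathrm{span}(f_1,\dots,f_{n-1})$ (a $B_n$-submodule), and $\rho:B_n\to\mathrm{GL}(\mathbf{F})\cong\mathrm{GL}_{n-1}(\mathbb{C})$ the resulting representation, with matrices whose $j$th column is the coordinate vector of the image of $f_j$. Here $e_{ij}$ ($1\le i,j\le n-1$) denote the standard matrix units in $(n-1)\times(n-1)$ matrices, $E(i)=I_{n-1}-e_{ii}$, and $\delta$ is the Kronecker delta (terms with indices outside $1,\dots,n-1$ are absent). *)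

(* Defs.v *)
From HB Require Import structures.
From mathcomp Require Import all_boot all_order all_algebra.
From mathcomp Require Import reals.
From mathcomp Require Import complex.
From mathcomp Require Import mpoly.
Set Implicit Arguments. Unset Strict Implicit. Unset Printing Implicit Defensive.
Import Order.TTheory GRing.Theory Num.Theory.
Local Open Scope ring_scope.

Section Defs.
Variable C : fieldType.

Definition is_root_of_unity (x : C) : Prop := exists k : nat, (0 < k)%N /\ x ^+ k = 1.

(* Generalized Burau matrix of sigma_(g+1) on E = C^n, basis e_1..e_n
   (0-based index k : 'I_n stands for e_(k+1)); column j = coordinates of
   the image of e_(j+1):
     sigma_i e_j = q1 e_j (j <> i,i+1), sigma_i e_(i+1) = -q2 e_i,
     sigma_i e_i = (q1+q2) e_i + q1 e_(i+1). *)
Definition burau_gen (n : nat) (q1 q2 : C) (g : 'I_n.-1) : 'M[C]_n :=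
  \matrix_(k, j)
    (if (j == g :> nat) then
       (if (k == g :> nat) then q1 + q2 else if (k == g.+1 :> nat) then q1 else 0)
     else if (j == g.+1 :> nat) then
       (if (k == g :> nat) then - q2 else 0)
     else (if k == j then q1 else 0)).

(* Braid words: a letter (g, true) is sigma_(g+1), (g, false) its inverse. *)
Definition burau_word (n : nat) (q1 q2 : C) (w : seq ('I_n.-1 * bool)) : 'M[C]_n :=
  foldr (fun l M => (if l.2 then burau_gen q1 q2 l.1
                     else invmx (burau_gen q1 q2 l.1)) *m M) 1%:M w.

(* The n x (n-1) matrix whose (j+1)th column is f_(j+1) = q2 e_(j+1) + q1 e_(j+2). *)
Definition Fmx (n : nat) (q1 q2 : C) : 'M[C]_(n, n.-1) :=
  \matrix_(k, j) (if (k == j :> nat) then q2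
                  else if (k == j.+1 :> nat) then q1 else 0).

(* rho(B_n): the matrices M (w.r.t. the basis f_1..f_(n-1)) of the
   restrictions to F of the Burau action of braids beta in B_n, i.e.
   Fmx *m M = burau(beta) *m Fmx. *)
Definition rho_image (n : nat) (q1 q2 : C) (M : 'M[C]_n.-1) : Prop :=
  exists w : seq ('I_n.-1 * bool), Fmx n q1 q2 *m M = burau_word q1 q2 w *m Fmx n q1 q2.

Definition mx_coords (m : nat) (A : 'M[C]_m) : 'I_(m * m) -> C :=
  fun k => mxvec A 0 k.

Definition zariski_closure_GL (m : nat) (S : 'M[C]_m -> Prop) (g : 'M[C]_m) : Prop :=
  g \in unitmx /\
  forall p : {mpoly C[m * m]},
    (forall h, S h -> p.@[mx_coords h] = 0) -> p.@[mx_coords g] = 0.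

(* H_i(z) (0-based i):  b(1-z) e_(i,i-1) + z e_(ii) + a(1-z) e_(i,i+1) + E(i),
   terms with indices out of range being absent. *)
Definition Hmx (m : nat) (a b : C) (i : 'I_m) (z : C) : 'M[C]_m :=
  \matrix_(r, c)
    (if r == i then
       (if c == i then z
        else if (c.+1 == i :> nat) then b * (1 - z)
        else if (c == i.+1 :> nat) then a * (1 - z) else 0)
     else (if r == c then 1 else 0)).

(* K_i(w):  b(w - w^(2-n)) e_(i,i-1) + w^(2-n) e_(ii) + a(w - w^(2-n)) e_(i,i+1)
   + w E(i). *)
Definition Kmx (n : nat) (a b : C) (i : 'I_n.-1) (w : C) : 'M[C]_n.-1 :=
  \matrix_(r, c)
    (if r == i then
       (if c == i then w ^- (n - 2)
        else if (c.+1 == i :> nat) then b * (w - w ^- (n - 2))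
        else if (c == i.+1 :> nat) then a * (w - w ^- (n - 2)) else 0)
     else (if r == c then w else 0)).

End Defs.

(* Main.v *)
Set Warnings "-notation-overridden,-ambiguous-paths,-notation-incompatible-prefix".
Require Import Defs.
From HB Require Import structures.
From mathcomp Require Import all_boot all_order all_algebra.
From mathcomp Require Import reals complex mpoly.
From mathcomp Require Import zify ring lra.
Set Implicit Arguments. Unset Strict Implicit. Unset Printing Implicit Defensive.
Import Order.TTheory GRing.Theory Num.Theory.
Local Open Scope ring_scope.

Section Gen.
Variable C : fieldType.

Lemma sum_delta m (F : nat -> C) (i : nat) : (i < m)%N ->
  \sum_(l < m) (((l : nat) == i)%:R * F l) = F i.
Proof.
move=> Hi; rewrite (bigD1 (Ordinal Hi)) //= eqxx mul1r big1 ?addr0 // => l Hl.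
have -> : ((l : nat) == i) = false.
  by apply/negbTE; apply: contra Hl => /eqP E; apply/eqP; apply: val_inj.
by rewrite mul0r.
Qed.

Definition vco (a b : C) (i l : nat) : C :=
  if l == i then 1 else if l.+1 == i then - b else if l == i.+1 then - a else 0.

Definition Pm m (a b : C) (i : nat) : 'M[C]_m :=
  \matrix_(r, c) (((r : nat) == i)%:R * vco a b i c).

Definition Mm m (a b : C) (i : nat) (x y : C) : 'M[C]_m :=
  x%:M + (y - x) *: Pm m a b i.

Lemma PmM m a b i : (i < m)%N -> Pm m a b i *m Pm m a b i = Pm m a b i.
Proof.
move=> Hi; apply/matrixP => r c; rewrite !mxE.
rewrite (eq_bigr (fun l : 'I_m => ((l:nat)==i)%:R * (((r:nat)==i)%:R * vco a b i l * vco a b i c))); last first.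
  by move=> l _; rewrite !mxE; ring.
by rewrite (@sum_delta m (fun l => ((r:nat)==i)%:R * vco a b i l * vco a b i c)) // /vco eqxx mulr1.
Qed.

Lemma MmM m a b i x y x' y' : (i < m)%N ->
  Mm m a b i x y *m Mm m a b i x' y' = Mm m a b i (x * x') (y * y').
Proof.
move=> Hi; rewrite /Mm mulmxDl !mulmxDr !mul_scalar_mx !mul_mx_scalar.
rewrite -!scalemxAl -!scalemxAr PmM // !scalerA.
apply/matrixP => r c; rewrite !mxE; ring.
Qed.

Lemma Mm11 m a b i : Mm m a b i 1 1 = 1%:M.
Proof. by rewrite /Mm subrr scale0r addr0. Qed.

Lemma MmZ m a b i s x y : s *: Mm m a b i x y = Mm m a b i (s * x) (s * y).
Proof.
rewrite /Mm scalerDr scale_scalar_mx scalerA; congr (_ + _); congr (_ *: _); ring.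
Qed.

Definition mpow m (A : 'M[C]_m) k := iter k (mulmx A) 1%:M.

Lemma mpowS m (A : 'M[C]_m) k : mpow A k.+1 = A *m mpow A k.
Proof. by []. Qed.

Lemma mpowSr m (A : 'M[C]_m) k : mpow A k.+1 = mpow A k *m A.
Proof.
elim: k => [|k IH]; first by rewrite /mpow /= mulmx1 mul1mx.
by rewrite [LHS]mpowS [in LHS]IH mulmxA.
Qed.

Lemma mpowD m (A : 'M[C]_m) k l : mpow A (k + l) = mpow A k *m mpow A l.
Proof.
elim: k => [|k IH]; first by rewrite mul1mx.
by rewrite addSn mpowS IH mulmxA -mpowS.
Qed.

Lemma mpowC m (A : 'M[C]_m) k l : mpow A k *m mpow A l = mpow A l *m mpow A k.
Proof. by rewrite -!mpowD addnC. Qed.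

Lemma mpowMm m a b i x y k : (i < m)%N ->
  mpow (Mm m a b i x y) k = Mm m a b i (x ^+ k) (y ^+ k).
Proof.
move=> Hi; elim: k => [|k IH]; first by rewrite !expr0 Mm11.
by rewrite mpowS IH MmM // !exprS.
Qed.

Lemma mpowZ m (A : 'M[C]_m) s k : mpow (s *: A) k = s ^+ k *: mpow A k.
Proof.
elim: k => [|k IH]; first by rewrite expr0 scale1r.
by rewrite !mpowS IH -scalemxAl -scalemxAr scalerA exprS.
Qed.

Lemma mpow_scalar m (s : C) k : mpow (s%:M : 'M[C]_m) k = (s ^+ k)%:M.
Proof.
elim: k => [|k IH]; first by rewrite expr0.
by rewrite mpowS IH -scalar_mxM exprS.
Qed.

End Gen.
Section LP.
Variable C : fieldType.

Definition LP (f : C -> C) := exists N (P : {poly C}), forall w, w != 0 -> w ^+ N * f w = P.[w].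

Lemma LP_const c : LP (fun _ => c).
Proof. by exists 0%N, c%:P => w _; rewrite expr0 mul1r hornerC. Qed.

Lemma LP_id : LP (fun w => w).
Proof. by exists 0%N, 'X => w _; rewrite expr0 mul1r hornerX. Qed.

Lemma LP_invpow k : LP (fun w => w ^- k).
Proof.
exists k, 1 => w w0; rewrite hornerC mulfV //; exact: expf_neq0.
Qed.

Lemma LP_add f g : LP f -> LP g -> LP (fun w => f w + g w).
Proof.
move=> [N1 [P1 H1]] [N2 [P2 H2]]; exists (N1 + N2)%N, ('X^N2 * P1 + 'X^N1 * P2).
move=> w w0; rewrite !hornerE -H1 // -H2 // exprD; ring.
Qed.

Lemma LP_mul f g : LP f -> LP g -> LP (fun w => f w * g w).
Proof.
move=> [N1 [P1 H1]] [N2 [P2 H2]]; exists (N1 + N2)%N, (P1 * P2).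
move=> w w0; rewrite hornerM -H1 // -H2 // exprD; ring.
Qed.

Lemma LP_ext f g : (forall w, f w = g w) -> LP f -> LP g.
Proof. by move=> E [N [P H]]; exists N, P => w w0; rewrite -E H. Qed.

Lemma LP_exp f k : LP f -> LP (fun w => f w ^+ k).
Proof.
move=> Hf; elim: k => [|k IH].
  by apply: (LP_ext _ (LP_const 1)) => w; rewrite expr0.
by apply: (LP_ext _ (LP_mul Hf IH)) => w; rewrite exprS.
Qed.

Lemma LP_sum (I : Type) (r : seq I) (F : I -> C -> C) :
  (forall i, LP (F i)) -> LP (fun w => \sum_(i <- r) F i w).
Proof.
move=> HF; elim: r => [|x r IH].
  by apply: (LP_ext _ (LP_const 0)) => w; rewrite big_nil.
by apply: (LP_ext _ (LP_add (HF x) IH)) => w; rewrite big_cons.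
Qed.

Lemma LP_prod (I : Type) (r : seq I) (F : I -> C -> C) :
  (forall i, LP (F i)) -> LP (fun w => \prod_(i <- r) F i w).
Proof.
move=> HF; elim: r => [|x r IH].
  by apply: (LP_ext _ (LP_const 1)) => w; rewrite big_nil.
by apply: (LP_ext _ (LP_mul (HF x) IH)) => w; rewrite big_cons.
Qed.

Lemma LP_meval k (p : {mpoly C[k]}) (v : 'I_k -> C -> C) :
  (forall i, LP (v i)) -> LP (fun w => p.@[fun i => v i w]).
Proof.
move=> Hv.
apply: (LP_ext (f := fun w => \sum_(mm <- msupp p) (p@_mm * \prod_(i <- index_enum 'I_k) v i w ^+ mm i))).
  by move=> w; rewrite mevalE.
apply: LP_sum => mm; apply: LP_mul; first exact: LP_const.
apply: (@LP_prod _ _ (fun i w => v i w ^+ mm i)) => i; exact: LP_exp.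
Qed.

Lemma LP_zero f (al : C) : LP f -> al != 0 -> ~ is_root_of_unity al ->
  (forall k, f (al ^+ k) = 0) -> forall w, w != 0 -> f w = 0.
Proof.
move=> [N [P H]] al0 Hnr Hk w w0.
have HP k : P.[al ^+ k] = 0 by rewrite -H ?expf_neq0 // Hk mulr0.
have Hinj : injective (fun k => al ^+ k).
  move=> i j /= E.
  wlog le: i j E / (i <= j)%N.
    by move=> W; case/orP: (leq_total i j) => h; [|symmetry]; apply: W.
  apply/eqP; rewrite eqn_leq le /= leqNgt; apply/negP => lt.
  apply: Hnr; exists (j - i)%N; split; first by rewrite subn_gt0.
  apply: (@mulfI _ (al ^+ i)); first exact: expf_neq0.
  by rewrite -exprD subnKC ?(ltnW lt) // mulr1 E.
have P0 : P = 0.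
  apply/eqP; apply/negPn/negP => Pn0.
  have : (size (mkseq (fun k => al ^+ k) (size P)) < size P)%N.
    apply: max_poly_roots => //; last exact: mkseq_uniq.
    by apply/allP => x /mapP [kk _ ->]; rewrite /root HP.
  by rewrite size_mkseq ltnn.
have := H w w0; rewrite P0 horner0 => /eqP; rewrite mulf_eq0 expf_eq0 (negbTE w0) andbF /=.
by move/eqP.
Qed.
End LP.
Ltac bash := repeat (case: eqP => /= ?; try (exfalso; lia)); rewrite ?mulr1n ?mulr0n.

Section Rel.
Variable C : fieldType.

Lemma Hmx_Mm m (a b : C) (i : 'I_m) z : Hmx a b i z = Mm m a b i 1 z.
Proof.
apply/matrixP => r c; rewrite /Hmx /Mm /Pm /vco !mxE -!val_eqE /=.
bash; ring.
Qed.

Lemma Kmx_Mm n (a b : C) (i : 'I_n.-1) w : Kmx a b i w = Mm n.-1 a b i w (w ^- (n - 2)).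
Proof.
apply/matrixP => r c; rewrite /Kmx /Mm /Pm /vco !mxE -!val_eqE /=.
bash; ring.
Qed.

Definition Fnat (q1 q2 : C) (k j : nat) : C :=
  if k == j then q2 else if k == j.+1 then q1 else 0.

Lemma intertw n (q1 q2 a b : C) (g : 'I_n.-1) :
  q1 != 0 -> 1 + - q2 / q1 != 0 ->
  a = (- q2 / q1) / (1 + - q2 / q1) -> b = 1 / (1 + - q2 / q1) ->
  Fmx n q1 q2 *m Mm n.-1 a b g q1 q2 = burau_gen q1 q2 g *m Fmx n q1 q2.
Proof.
move=> q10 qq0 Ha Hb.
have d0 : q1 - q2 != 0.
  apply: contraNneq qq0 => /eqP; rewrite subr_eq0 => /eqP <-.
  by rewrite mulNr divff // subrr.
have gn : (g.+1 < n)%N by case: n g => [|[|n]] [g' Hg] //=.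
apply/matrixP => k j; rewrite !mxE.
rewrite (eq_bigr (fun l : 'I_n.-1 => ((l:nat) == j)%:R * (q1 * Fnat q1 q2 k l)
   + ((l:nat) == g)%:R * ((q2 - q1) * vco a b g j * Fnat q1 q2 k l))); last first.
  move=> l _; rewrite /Fmx /Mm /Pm /Fnat !mxE -!val_eqE /=; bash; ring.
rewrite big_split /=.
rewrite (@sum_delta _ n.-1 (fun l => q1 * Fnat q1 q2 k l)) //.
rewrite (@sum_delta _ n.-1 (fun l => (q2 - q1) * vco a b g j * Fnat q1 q2 k l)) //.
rewrite (eq_bigr (fun l : 'I_n => ((l:nat) == k)%:R * (q1 * Fnat q1 q2 l j)
   + (((l:nat) == g)%:R * (Fnat q1 q2 k g * Fnat q1 q2 l j)
   - ((l:nat) == g.+1)%:R * (Fnat q1 q2 k g * Fnat q1 q2 l j)))); last first.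
  move=> l _; rewrite /Fmx /burau_gen /Fnat !mxE -!val_eqE /=; bash; ring.
rewrite big_split /= big_split /= sumrN.
rewrite (@sum_delta _ n (fun l => q1 * Fnat q1 q2 l j)) //.
rewrite (@sum_delta _ n (fun l => Fnat q1 q2 k g * Fnat q1 q2 l j)) //; last by apply: ltnW.
rewrite (@sum_delta _ n (fun l => Fnat q1 q2 k g * Fnat q1 q2 l j)) //.
rewrite /Fnat /vco; bash; rewrite ?Ha ?Hb; first [ring | field]; by rewrite q10 d0.
Qed.

End Rel.
Section DD.
Variable C : fieldType.
Variables (m : nat) (q a b : C).
Hypothesis hb : (1 + q) * b = 1.
Hypothesis ha : (1 + q) * a = q.

Definition ev (j : nat) : 'cV[C]_m := \col_r (((r : nat) == j)%:R).
Definition Anat g : 'M[C]_m := Mm m a b g 1 (- q).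
Definition cof (g j : nat) : C :=
  if j == g then - q - 1 else if j.+1 == g then 1 else if j == g.+1 then q else 0.
Definition Dt k t := foldr (fun g M => Anat g *m M) 1%:M (iota k t).

Lemma mulmx_ev (A : 'M[C]_m) (j : 'I_m) r : (A *m ev j) r 0 = A r j.
Proof.
rewrite mxE (bigD1 j) //= mxE eqxx mulr1 big1 ?addr0 // => l Hl; rewrite mxE.
have -> : ((l : nat) == j) = false.
  by apply/negbTE; apply: contra Hl => /eqP E; apply/eqP; apply: val_inj.
by rewrite mulr0.
Qed.

Lemma Aev g j : (g < m)%N -> (j < m)%N -> Anat g *m ev j = ev j + cof g j *: ev g.
Proof.
move=> gm jm; apply/matrixP => r c; rewrite ord1.
rewrite -[j]/(nat_of_ord (Ordinal jm)) mulmx_ev /Anat /Mm /Pm /cof /vco /ev !mxE /=.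
rewrite -!val_eqE /=; bash; rewrite ?addr0 ?add0r; try ring.
- by transitivity ((1+q)*b); [ring | rewrite hb mulr1].
- by transitivity ((1+q)*a); [ring | rewrite ha mulr1].
Qed.

Lemma DtS k t : Dt k t.+1 = Anat k *m Dt k.+1 t.
Proof. by []. Qed.

Lemma C1 t : forall k j, (k + t = m)%N -> (j.+1 < k)%N -> Dt k t *m ev j = ev j.
Proof.
elim: t => [|t IH] k j km jk; first by rewrite mul1mx.
rewrite DtS -mulmxA IH ?addSnnS //; last by lia.
rewrite Aev; [|lia|lia].
rewrite /cof; bash; by rewrite scale0r addr0.
Qed.

Lemma C2 t k j : (k + t.+1 = m)%N -> j.+1 = k -> Dt k t.+1 *m ev j = ev j + ev k.
Proof.
move=> km jk; rewrite DtS -mulmxA C1 ?addSnnS //; last by lia.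
rewrite Aev; [|lia|lia].
rewrite /cof; bash; by rewrite scale1r.
Qed.

Lemma C3 t : forall k j, (k + t = m)%N -> (k <= j)%N -> (j.+1 < m)%N -> Dt k t *m ev j = ev j.+1.
Proof.
elim: t => [|t IH] k j km kj jm; first by exfalso; lia.
rewrite DtS -mulmxA.
case: (ltngtP k j) => kj'; [ | by exfalso; lia | ]; last first.
  have [t' Et] : exists t', t = t'.+1 by case: t {IH} km => [|t'] km; [exfalso; lia| exists t'].
  subst t; rewrite -kj' C2 ?addSnnS //; try lia.
  rewrite mulmxDr !Aev; [|lia|lia|lia|lia].
  rewrite /cof; bash.
  apply/matrixP => r c; rewrite !mxE; ring.
rewrite IH; [|lia|lia|lia].
rewrite Aev; [|lia|lia].
rewrite /cof; bash; by rewrite scale0r addr0.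
Qed.

Lemma C4 t : forall k, (k + t = m)%N -> (k < m)%N ->
  Dt k t *m ev m.-1 = - \sum_(k <= l < m) q ^+ (m - l) *: ev l.
Proof.
elim: t => [|t IH] k km kl; first by exfalso; lia.
rewrite DtS -mulmxA.
case: t IH km => [|t] IH km.
  have Ek : m.-1 = k by lia.
  rewrite mul1mx Ek Aev; [|lia|lia].
  have E1 : (m - k = 1)%N by lia.
  have -> : index_iota k m = [:: k] by rewrite /index_iota E1.
  rewrite big_seq1 E1 expr1 /cof eqxx.
  apply/matrixP => r c; rewrite !mxE; ring.
rewrite IH ?addSnnS //; last by lia.
rewrite mulmxN mulmx_sumr [in RHS]big_ltn //; congr (- _).
rewrite (eq_big_nat _ _ (F2 := fun l => q ^+ (m - l) *: ev l + (q ^+ (m - l) * cof k l) *: ev k)); last first.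
  by move=> l Hl; rewrite -scalemxAr Aev; [rewrite scalerDr scalerA|lia|lia].
rewrite big_split /= addrC; congr (_ + _).
rewrite big_ltn; last by lia.
rewrite big_nat_cond big1 ?addr0; last first.
  move=> l /andP [/andP [Hl1 Hl2] _]; rewrite /cof; bash; by rewrite mulr0 scale0r.
rewrite /cof; bash; congr (_ *: _).
have -> : (m - k = (m - k.+1).+1)%N by lia.
by rewrite exprSr.
Qed.

Definition DD := Dt 0 m.
Definition zz := \sum_(0 <= l < m) q ^+ (m - l) *: ev l.

Lemma DE1 j : (j.+1 < m)%N -> DD *m ev j = ev j.+1.
Proof. by move=> jm; apply: C3. Qed.

Lemma DE2 : (0 < m)%N -> DD *m ev m.-1 = - zz.
Proof. by move=> m0; apply: C4. Qed.

Lemma Dz : (0 < m)%N -> DD *m zz = - (q ^+ m.+1) *: ev 0.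
Proof.
move=> m0; set m' := m.-1; have Em : m = m'.+1 by rewrite /m'; lia.
have Ii : index_iota 0 m = index_iota 0 m'.+1 by rewrite -Em.
have Hz1 : zz = \sum_(0 <= l < m') q ^+ (m - l) *: ev l + q ^+ (m - m') *: ev m'.
  by rewrite /zz Ii big_nat_recr.
have Hz2 : zz = q ^+ m *: ev 0 + \sum_(0 <= l < m') q ^+ (m - l.+1) *: ev l.+1.
  by rewrite /zz Ii big_nat_recl // subn0.
rewrite {1}Hz1 mulmxDr mulmx_sumr -scalemxAr DE2 //.
rewrite (eq_big_nat _ _ (F2 := fun l => q ^+ (m - l) *: ev l.+1)); last first.
  by move=> l Hl; rewrite -scalemxAr DE1 //; lia.
have -> : (m - m' = 1)%N by lia.
rewrite expr1 Hz2 scalerN scalerDr scaler_sumr scalerA -exprS.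
rewrite (eq_big_nat _ _ (F1 := fun l => q *: (q ^+ (m - l.+1) *: ev l.+1))
   (F2 := fun l => q ^+ (m - l) *: ev l.+1)); last first.
  move=> l Hl; rewrite scalerA -exprS; congr (_ ^+ _ *: _); lia.
by rewrite opprD addrCA subrr addr0 scaleNr.
Qed.

Lemma Dpow j : (j < m)%N -> mpow DD j *m ev 0 = ev j.
Proof.
elim: j => [|j IH] jm; first by rewrite mul1mx.
by rewrite mpowS -mulmxA IH ?DE1 //; apply: ltnW.
Qed.

Lemma DpowN : (0 < m)%N -> mpow DD m.+1 *m ev 0 = q ^+ m.+1 *: ev 0.
Proof.
move=> m0; have Em : mpow DD m = DD *m mpow DD m.-1 by rewrite -mpowS prednK.
rewrite mpowS Em -!mulmxA Dpow; last by lia.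
by rewrite DE2 // mulmxN Dz // scaleNr opprK.
Qed.

Lemma mx_ev_eq (A B : 'M[C]_m) : (forall j : 'I_m, A *m ev j = B *m ev j) -> A = B.
Proof.
move=> H; apply/matrixP => r c.
by rewrite -!mulmx_ev H.
Qed.

Lemma Dn : (0 < m)%N -> mpow DD m.+1 = (q ^+ m.+1)%:M.
Proof.
move=> m0; apply: mx_ev_eq => j.
rewrite -Dpow // mulmxA mpowC -mulmxA DpowN // -scalemxAr mul_scalar_mx.
by [].
Qed.

End DD.

Section Rho.
Variable C : fieldType.
Variables (n : nat) (q1 q2 a b : C).

Lemma rho1 : @rho_image _ n q1 q2 1%:M.
Proof. by exists [::]; rewrite mulmx1 mul1mx. Qed.

Lemma rhoM M1 M2 : @rho_image _ n q1 q2 M1 -> @rho_image _ n q1 q2 M2 ->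
  @rho_image _ n q1 q2 (M1 *m M2).
Proof.
move=> [w1 H1] [w2 H2]; exists (w1 ++ w2).
have -> : burau_word q1 q2 (w1 ++ w2) = burau_word q1 q2 w1 *m burau_word q1 q2 w2.
  by elim: w1 {H1} => [|l w IH] /=; rewrite ?mul1mx // IH mulmxA.
by rewrite mulmxA H1 -!mulmxA H2.
Qed.

Lemma rho_mpow M k : @rho_image _ n q1 q2 M -> @rho_image _ n q1 q2 (mpow M k).
Proof.
move=> HM; elim: k => [|k IH]; first exact: rho1.
by rewrite mpowS; apply: rhoM.
Qed.

Hypotheses (q10 : q1 != 0) (qq0 : 1 + - q2 / q1 != 0)
  (Ha : a = (- q2 / q1) / (1 + - q2 / q1)) (Hb : b = 1 / (1 + - q2 / q1)).

Lemma rho_gen (g : 'I_n.-1) : @rho_image _ n q1 q2 (Mm n.-1 a b g q1 q2).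
Proof.
by exists [:: (g, true)]; rewrite /= mulmx1 intertw.
Qed.

Lemma rho_foldr (s : seq nat) : all (fun g => g < n.-1)%N s ->
  @rho_image _ n q1 q2 (foldr (fun g M => Mm n.-1 a b g q1 q2 *m M) 1%:M s).
Proof.
elim: s => [|g s IH] /=; first by move=> _; exact: rho1.
case/andP => gn Hs; apply: rhoM; last exact: IH.
exact: (rho_gen (Ordinal gn)).
Qed.

End Rho.

Lemma foldr_scale (C : fieldType) m (A : nat -> 'M[C]_m) (s : seq nat) (c : C) :
  foldr (fun g M => (c *: A g) *m M) 1%:M s = c ^+ size s *: foldr (fun g M => A g *m M) 1%:M s.
Proof.
elim: s => [|g s IH] /=; first by rewrite scale1r.
by rewrite IH -scalemxAl -scalemxAr scalerA exprS.
Qed.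

Lemma LP_Mm (C : fieldType) m a b (i : nat) (x y : C -> C) (k : 'I_(m * m)) :
  LP x -> LP y -> LP (fun w => mx_coords (Mm m a b i (x w) (y w)) k).
Proof.
move=> Hx Hy; case/mxvec_indexP: k => r c.
apply: (LP_ext (f := fun w => x w * ((r == c)%:R) + (y w + (-1) * x w) * (((r : nat) == i)%:R * vco a b i c))).
  by move=> w; rewrite /mx_coords mxvecE /Mm /Pm !mxE mulr_natr; congr (_ + _ * _); ring.
apply: LP_add; apply: LP_mul => //; try exact: LP_const.
by apply: LP_add => //; apply: LP_mul => //; exact: LP_const.
Qed.

Theorem propositionA3 (R : realType) (n : nat) (q1 q2 : R[i]) :
  (2 <= n)%N -> q1 * q2 != 0 -> ~ is_root_of_unity (- q2 / q1) ->
  let q := - q2 / q1 in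
  let a := q / (1 + q) in
  let b := 1 / (1 + q) in
  let Gbar := zariski_closure_GL (@rho_image _ n q1 q2) in
  (~ is_root_of_unity (q1 ^+ (n - 2) * q2) ->
     forall (i : 'I_n.-1) (z : R[i]), z != 0 -> Gbar (Hmx a b i z)) /\
  (is_root_of_unity (q1 ^+ (n - 2) * q2) ->
     forall (i : 'I_n.-1) (w : R[i]), w != 0 -> Gbar (Kmx a b i w)).
Proof.
move=> Hn Hq Hnr q a b Gbar.
have q10 : q1 != 0 by apply: contraNneq Hq => ->; rewrite mul0r.
have q20 : q2 != 0 by apply: contraNneq Hq => ->; rewrite mulr0.
have qn1 : 1 + q != 0.
  apply/eqP => E; apply: Hnr; exists 2%N; split => //.
  have Eq : q = -1 by apply: (addrI 1); rewrite E subrr.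
  by rewrite -/q Eq sqrrN expr1n.
have hb : (1 + q) * b = 1 by rewrite /b; field.
have ha : (1 + q) * a = q by rewrite /a; field.
have Ha : a = (- q2 / q1) / (1 + - q2 / q1) by [].
have Hb : b = 1 / (1 + - q2 / q1) by [].
have Hq2 : q1 * - q = q2 by rewrite /q; field.
have q0 : q != 0 by rewrite /q mulf_neq0 ?oppr_eq0 ?invr_eq0.
have mq0 : - q != 0 by rewrite oppr_eq0.
have m0 : (0 < n.-1)%N by lia.
split.
- move=> Hd i z z0; split.
  + rewrite Hmx_Mm.
    have := MmM a b 1 z 1 z^-1 (ltn_ord i).
    by rewrite mulr1 mulfV // Mm11 => /mulmx1_unit [].
  move=> p Hp; rewrite Hmx_Mm.
  pose c := (q1 ^+ n.-1) ^+ n.-1.+1 * q ^+ n.-1.+1.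
  have Hc : @rho_image _ n q1 q2 (c%:M).
    have Hs : all (fun g => (g < n.-1)%N) (iota 0 n.-1) by apply/allP => g; rewrite mem_iota.
    have H1 := @rho_foldr _ n q1 q2 a b q10 qn1 Ha Hb _ Hs.
    have H2 := @rho_mpow _ n q1 q2 _ n.-1.+1 H1.
    have E1 : foldr (fun g M => Mm n.-1 a b g q1 q2 *m M) 1%:M (iota 0 n.-1) = q1 ^+ n.-1 *: @DD _ n.-1 q a b.
      have := foldr_scale (fun g => Mm n.-1 a b g 1 (-q)) (iota 0 n.-1) q1.
      rewrite size_iota => <-.
      by elim: (iota 0 n.-1) => //= g s ->; rewrite MmZ mulr1 Hq2.
    by rewrite E1 mpowZ Dn // scale_scalar_mx in H2.
  have Hd' : q1 ^+ n.-1 * q = - (q1 ^+ (n - 2) * q2).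
    have -> : q1 ^+ n.-1 = q1 ^+ (n - 2) * q1 by rewrite -exprSr; congr (_ ^+ _); lia.
    rewrite -mulrA -[in RHS]Hq2.
    by rewrite !mulrN opprK.
  have c0 : c != 0 by rewrite /c mulf_neq0 // expf_neq0 // expf_neq0.
  have cnr : ~ is_root_of_unity c.
    move=> [k [k0 ck]]; apply: Hd; exists (n.-1.+1 * k * 2)%N; split.
      by rewrite !muln_gt0 k0.
    have cE : c = (q1 ^+ n.-1 * q) ^+ n.-1.+1 by rewrite /c [RHS]exprMn.
    rewrite mulnC exprM -sqrrN -Hd'.
    by rewrite exprAC exprM -cE ck expr1n.
  have E : forall x1 x2 y1 y2, x1 = x2 -> y1 = y2 ->
      @rho_image _ n q1 q2 (Mm n.-1 a b i x1 y1) -> @rho_image _ n q1 q2 (Mm n.-1 a b i x2 y2).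
    by move=> ? ? ? ? -> ->.
  have Step1 k : p.@[mx_coords (Mm n.-1 a b i 1 ((- q) ^+ k))] = 0.
    pose h := fun s => p.@[mx_coords (Mm n.-1 a b i (q1 ^+ k * s) (q1 ^+ k * s * (- q) ^+ k))].
    have LPh : LP h.
      apply: (LP_meval p (v := fun kk s => mx_coords (Mm n.-1 a b i (q1 ^+ k * s) (q1 ^+ k * s * (- q) ^+ k)) kk)).
      move=> kk; apply: LP_Mm.
        by apply: LP_mul; [exact: LP_const | exact: LP_id].
      by apply: LP_mul; [apply: LP_mul; [exact: LP_const | exact: LP_id] | exact: LP_const].
    have hz l : h (c ^+ l) = 0.
      rewrite /h; apply: Hp.
      have := rhoM (rho_mpow k (@rho_gen _ n q1 q2 a b q10 qn1 Ha Hb i)) (rho_mpow l Hc).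
      rewrite mpowMm // mpow_scalar mul_mx_scalar MmZ.
      move=> HH; apply: (E _ _ _ _ _ _ HH); first by ring.
      rewrite -[in LHS]Hq2 [(q1 * - q) ^+ k]exprMn mulrA; congr (_ * _); exact: mulrC.
    have := LP_zero LPh c0 cnr hz (w := (q1 ^+ k)^-1).
    by rewrite /h mulfV ?expf_neq0 // mul1r => ->; rewrite ?invr_eq0 ?expf_neq0.
  pose f := fun t => p.@[mx_coords (Mm n.-1 a b i 1 t)].
  have LPf : LP f.
    apply: (LP_meval p (v := fun kk t => mx_coords (Mm n.-1 a b i 1 t) kk)).
    by move=> kk; apply: LP_Mm; [exact: LP_const | exact: LP_id].
  apply: (LP_zero LPf mq0 _ Step1 z0).
  move=> [k [k0 qk]]; apply: Hnr; exists (2 * k)%N; split; first by rewrite muln_gt0 k0.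
  by rewrite -/q exprM -sqrrN -exprM mulnC exprM qk expr1n.
move=> [N [N0 dN]] i w w0; split.
  rewrite Kmx_Mm.
  have := MmM a b w (w ^- (n - 2)) w^-1 (w ^+ (n - 2)) (ltn_ord i).
  by rewrite mulfV // mulVf ?expf_neq0 // Mm11 => /mulmx1_unit [].
move=> p Hp; rewrite Kmx_Mm.
pose u := q1 ^+ N.
have u0 : u != 0 by rewrite expf_neq0.
have Y0 : u ^+ (n - 2) != 0 by rewrite expf_neq0.
have E2 : q2 ^+ N = (u ^+ (n - 2))^-1.
  have E : q2 ^+ N * u ^+ (n - 2) = 1.
    by rewrite /u exprAC -exprMn mulrC.
  by rewrite -[LHS]mulr1 -(divff Y0) mulrA E mul1r.
have unr : ~ is_root_of_unity u.
  move=> [k [k0 uk]]; apply: Hnr; exists (2 * (N * k))%N; split.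
    by rewrite !muln_gt0 k0 N0.
  have e1 : q1 ^+ (N * k) = 1 by rewrite exprM.
  have e2 : q2 ^+ (N * k) = 1 by rewrite exprM E2 exprVn -exprM mulnC exprM uk expr1n invr1.
  rewrite exprM.
  by rewrite [(- q2 / q1) ^+ 2]exprMn sqrrN exprMn exprAC e2 expr1n mul1r exprAC exprVn e1 invr1 expr1n.
pose f := fun t => p.@[mx_coords (Mm n.-1 a b i t (t ^- (n - 2)))].
have LPf : LP f.
  apply: (LP_meval p (v := fun kk t => mx_coords (Mm n.-1 a b i t (t ^- (n - 2))) kk)).
  by move=> kk; apply: LP_Mm; [exact: LP_id | exact: LP_invpow].
apply: (LP_zero LPf u0 unr _ w0) => j.
apply: Hp.
have := rho_mpow (N * j) (@rho_gen _ n q1 q2 a b q10 qn1 Ha Hb i).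
rewrite mpowMm //.
have E : forall x1 x2 y1 y2, x1 = x2 -> y1 = y2 ->
    @rho_image _ n q1 q2 (Mm n.-1 a b i x1 y1) -> @rho_image _ n q1 q2 (Mm n.-1 a b i x2 y2).
  by move=> ? ? ? ? -> ->.
apply: E; first by rewrite exprM.
by rewrite exprM E2 exprVn -exprM mulnC exprM.
Qed.
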